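(* Let $f(x)=x^5+px^4+qx^3+rx^2+sx+t$ with real coefficients and let $D$, $L_1$ be as in the context. Suppose $D=0$ and $L_1\neq 0$. Then $f$ has exactly one double root and three simple roots. Moreover, if $L_1>0$ then the double root and all three simple roots are real (4 distinct real roots), and if $L_1<0$ then $f$ has one real double root, one real simple root and a pair of non-real complex conjugate simple roots.
   Context: Let $\alpha_1,\dots,\alpha_5\in\mathbb{C}$ be the roots of $f$ listed with multiplicity. $D=\prod_{1\le i<j\le 5}(\alpha_i-\alpha_j)^2$ is the discriminant of $f$. $L_1=-264ps^2r-12p^3tq^2+36r^3pq-124srpq^2+28srp^3q+260sptq-132p^2qrt+240pr^2t+234sqr^2+32p^4tr+48ptq^3-56sp^3t-80q^2rt+194qs^2p^2-600str-6q^3sp^2+2p^2q^2r^2-12sr^2p^2-54r^4+320s^3-8q^3r^2-8r^3p^3+250qt^2-176q^2s^2+24q^4s-36p^4s^2-100p^2t^2$. *)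

(* Defs.v *)
From HB Require Import structures.
From mathcomp Require Import all_boot all_order all_algebra.
Set Implicit Arguments. Unset Strict Implicit. Unset Printing Implicit Defensive.
Import Order.TTheory GRing.Theory Num.Theory.
Local Open Scope ring_scope.

Definition quintic (C : numClosedFieldType) (p q r s t : C) : {poly C} :=
  'X^5 + p%:P * 'X^4 + q%:P * 'X^3 + r%:P * 'X^2 + s%:P * 'X + t%:P.

Definition disc_of_roots (C : numClosedFieldType) (al : seq C) : C :=
  \prod_(i < size al) \prod_(j < size al | (i < j)%N) (al`_i - al`_j) ^+ 2.

Definition L1 (C : numClosedFieldType) (p q r s t : C) : C :=
  - 264 * p * s^+2 * r - 12 * p^+3 * t * q^+2 + 36 * r^+3 * p * q
  - 124 * s * r * p * q^+2 + 28 * s * r * p^+3 * q + 260 * s * p * t * q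
  - 132 * p^+2 * q * r * t + 240 * p * r^+2 * t + 234 * s * q * r^+2
  + 32 * p^+4 * t * r + 48 * p * t * q^+3 - 56 * s * p^+3 * t
  - 80 * q^+2 * r * t + 194 * q * s^+2 * p^+2 - 600 * s * t * r
  - 6 * q^+3 * s * p^+2 + 2 * p^+2 * q^+2 * r^+2 - 12 * s * r^+2 * p^+2
  - 54 * r^+4 + 320 * s^+3 - 8 * q^+3 * r^+2 - 8 * r^+3 * p^+3
  + 250 * q * t^+2 - 176 * q^+2 * s^+2 + 24 * q^+4 * s
  - 36 * p^+4 * s^+2 - 100 * p^+2 * t^+2.

(* Main.v *)
Require Import Defs.
From HB Require Import structures.
From mathcomp Require Import all_boot all_order all_algebra.
From mathcomp Require Import ring zify.
Import Order.TTheory GRing.Theory Num.Theory.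
Local Open Scope ring_scope.

Ltac permtac := apply/permP => P /=; lia.
Lemma L1_id (C : numClosedFieldType) (a b c d : C) :
  L1 (-(a+a+b+c+d)) (a*a + a*b+a*c+a*d+a*b+a*c+a*d+b*c+b*d+c*d)
     (-(a*a*b+a*a*c+a*a*d+a*b*c+a*b*d+a*c*d+a*b*c+a*b*d+a*c*d+b*c*d))
     (a*a*b*c+a*a*b*d+a*a*c*d+a*b*c*d+a*b*c*d) (-(a*a*b*c*d))
  = 2 * ((a-b)*(a-c)*(a-d)*(b-c)*(b-d)*(c-d))^+2.
Proof. rewrite /L1. ring. Qed.
Lemma exists_double (C : numClosedFieldType) (al : seq C) :
  size al = 5%N -> disc_of_roots al = 0 ->
  exists a b c d : C, perm_eq al [:: a; a; b; c; d].
Proof.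
case: al => [|x1 [|x2 [|x3 [|x4 [|x5 [|? ?]]]]]] //= _.
move/eqP; rewrite /disc_of_roots => /prodf_eq0 [i _ ].
move/prodf_eq0 => [j ij].
rewrite expf_eq0 /= subr_eq0 => /eqP.
case: i ij => [[|[|[|[|[|?]]]]] ?]; case: j => [[|[|[|[|[|?]]]]] ?] //= _ E; subst.
all: first [ exists x1, x2, x3, x4; permtac | exists x1, x3, x4, x5; permtac
           | exists x2, x1, x3, x4; permtac | exists x3, x1, x2, x4; permtac
           | exists x4, x1, x2, x3; permtac | exists x5, x1, x2, x3; permtac
           | exists x1, x2, x4, x5; permtac | exists x1, x2, x3, x5; permtac
           | exists x2, x1, x3, x5; permtac | exists x2, x1, x4, x5; permtac
           | exists x3, x1, x2, x5; permtac | exists x2, x3, x4, x5; permtac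
           | exists x3, x2, x4, x5; permtac | exists x4, x2, x3, x5; permtac
           | exists x5, x2, x3, x4; permtac | exists x3, x1, x4, x5; permtac
           | exists x4, x1, x3, x5; permtac | exists x4, x1, x2, x5; permtac
           | exists x5, x1, x3, x4; permtac | exists x5, x1, x2, x4; permtac ].
Qed.
Lemma quintic_coef (C : numClosedFieldType) (p q r s t : C) :
  [/\ (quintic p q r s t)`_4 = p, (quintic p q r s t)`_3 = q,
      (quintic p q r s t)`_2 = r, (quintic p q r s t)`_1 = s
    & (quintic p q r s t)`_0 = t].
Proof.
by rewrite /quintic !coefD !coefCM !coefXn !coefX !coefC /=; split; ring.
Qed.

Lemma quintic_inj (C : numClosedFieldType) (p q r s t p' q' r' s' t' : C) :
  quintic p q r s t = quintic p' q' r' s' t' ->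
  [/\ p = p', q = q', r = r', s = s' & t = t'].
Proof.
move=> E; have [h1 h2 h3 h4 h5] := quintic_coef _ p q r s t.
have [k1 k2 k3 k4 k5] := quintic_coef _ p' q' r' s' t'.
split; [rewrite -h1 -k1 | rewrite -h2 -k2 | rewrite -h3 -k3 | rewrite -h4 -k4 | rewrite -h5 -k5]; by rewrite E.
Qed.

Lemma vieta (C : numClosedFieldType) (a b c d : C) :
  \prod_(z <- [:: a; a; b; c; d]) ('X - z%:P) =
  quintic (-(a+a+b+c+d)) (a*a + a*b+a*c+a*d+a*b+a*c+a*d+b*c+b*d+c*d)
     (-(a*a*b+a*a*c+a*a*d+a*b*c+a*b*d+a*c*d+a*b*c+a*b*d+a*c*d+b*c*d))
     (a*a*b*c+a*a*b*d+a*a*c*d+a*b*c*d+a*b*c*d) (-(a*a*b*c*d)).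
Proof.
rewrite !big_cons big_nil /quintic.
rewrite !(polyCN, polyCD, polyCM).
ring.
Qed.

Lemma sign_pos (C : numClosedFieldType) (a b c d : C) :
  a \is Num.real -> b \is Num.real -> c \is Num.real -> d \is Num.real ->
  (a-b)*(a-c)*(a-d)*(b-c)*(b-d)*(c-d) != 0 ->
  0 < 2 * ((a-b)*(a-c)*(a-d)*(b-c)*(b-d)*(c-d))^+2.
Proof.
move=> ha hb hc hd hX; rewrite mulr_gt0 ?ltr0n //.
by rewrite real_exprn_even_gt0 ?hX ?orbT // !(rpredM, rpredB).
Qed.

Lemma sign_neg (C : numClosedFieldType) (a w u v : C) :
  a \is Num.real -> w \is Num.real -> v = u^* ->
  (a-w)*(a-u)*(a-v)*(w-u)*(w-v)*(u-v) != 0 ->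
  2 * ((a-w)*(a-u)*(a-v)*(w-u)*(w-v)*(u-v))^+2 < 0.
Proof.
move=> ha hw hv hX.
set Y := (a-w)*(a-u)*(a-v)*(w-u)*(w-v).
have hY : Y \is Num.real.
  apply/CrealP; rewrite /Y !(rmorphM, rmorphB) /= (conj_Creal ha) (conj_Creal hw).
  rewrite hv conjCK; ring.
have hz : (u - v)^+2 = - `|u - v|^+2.
  by rewrite normCK rmorphB /= hv conjCK; ring.
move: hX; rewrite mulf_eq0 negb_or => /andP [hY0 hz0].
rewrite exprMn hz mulrN mulrN oppr_lt0 mulr_gt0 ?ltr0n // mulr_gt0 //.
  by rewrite real_exprn_even_gt0 ?hY0 ?orbT.
by rewrite exprn_gt0 // normr_gt0.
Qed.

Lemma coefs_of_perm (C : numClosedFieldType) (p q r s t : C) (al : seq C) (a b c d : C) :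
  quintic p q r s t = \prod_(a <- al) ('X - a%:P) -> perm_eq al [:: a; a; b; c; d] ->
  [/\ p = -(a+a+b+c+d), q = (a*a + a*b+a*c+a*d+a*b+a*c+a*d+b*c+b*d+c*d),
     r = (-(a*a*b+a*a*c+a*a*d+a*b*c+a*b*d+a*c*d+a*b*c+a*b*d+a*c*d+b*c*d)),
     s = (a*a*b*c+a*a*b*d+a*a*c*d+a*b*c*d+a*b*c*d) & t = (-(a*a*b*c*d))].
Proof. move=> h hp; apply: quintic_inj; by rewrite h (perm_big _ hp) vieta. Qed.

Lemma L1_perm (C : numClosedFieldType) (p q r s t : C) (al : seq C) (a b c d : C) :
  quintic p q r s t = \prod_(a <- al) ('X - a%:P) -> perm_eq al [:: a; a; b; c; d] ->
  L1 p q r s t = 2 * ((a-b)*(a-c)*(a-d)*(b-c)*(b-d)*(c-d))^+2.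
Proof. by move=> h hp; have [-> -> -> -> ->] := coefs_of_perm _ _ _ _ _ _ _ _ _ _ _ h hp; exact: L1_id. Qed.

Lemma uniq_prod (C : numClosedFieldType) (a b c d : C) :
  uniq [:: a; b; c; d] -> (a-b)*(a-c)*(a-d)*(b-c)*(b-d)*(c-d) != 0.
Proof.
rewrite /= !inE !negb_or => /and4P[/and3P[h1 h2 h3] /andP[h4 h5] h6 _].
by rewrite !mulf_neq0 // subr_eq0.
Qed.

Lemma conj_eq (C : numClosedFieldType) (x y : C) : x^* = y -> x = y^*.
Proof. by move<-; rewrite conjCK. Qed.

Lemma perm1 (C : numClosedFieldType) (a b c d : C) :
  perm_eq [:: a; a; b; c; d] [:: a; a; c; b; d].
Proof. permtac. Qed.
Lemma perm2 (C : numClosedFieldType) (a b c d : C) :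
  perm_eq [:: a; a; b; c; d] [:: a; a; d; b; c].
Proof. permtac. Qed.

Arguments L1_perm {C p q r s t al a b c d}.
Arguments coefs_of_perm {C p q r s t al a b c d}.
Arguments exists_double {C al}.
Arguments conj_eq {C x y}.

Theorem mainTheorem2 (C : numClosedFieldType) (p q r s t : C)
  (hp : p \is Num.real) (hq : q \is Num.real) (hr : r \is Num.real)
  (hs : s \is Num.real) (ht : t \is Num.real)
  (al : seq C) (hsize : size al = 5%N)
  (hroots : quintic p q r s t = \prod_(a <- al) ('X - a%:P))
  (hD : disc_of_roots al = 0) (hL : L1 p q r s t != 0) :
  (exists a b c d : C,
      perm_eq al [:: a; a; b; c; d] /\ uniq [:: a; b; c; d])
  /\ (0 < L1 p q r s t ->
      exists a b c d : C,
        [/\ perm_eq al [:: a; a; b; c; d], uniq [:: a; b; c; d]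
          & all (fun z => z \is Num.real) [:: a; b; c; d]])
  /\ (L1 p q r s t < 0 ->
      exists a b c d : C,
        [/\ perm_eq al [:: a; a; b; c; d], uniq [:: a; b; c; d],
            a \is Num.real, b \is Num.real
          & c \isn't Num.real /\ d = Num.conj c]).
Proof.
have [a [b [c [d hperm]]]] := exists_double hsize hD.
have hL1 := L1_perm hroots hperm.
have hX : (a-b)*(a-c)*(a-d)*(b-c)*(b-d)*(c-d) != 0.
  apply/eqP => E; move: hL; by rewrite hL1 E expr0n /= mulr0 eqxx.
move: (hX); rewrite !mulf_eq0 !negb_or !subr_eq0.
move=> /andP [/andP [/andP [/andP [/andP [hab hac] had] hbc] hbd] hcd].
have huniq : uniq [:: a; b; c; d].
  by rewrite /= !inE !negb_or hab hac had hbc hbd hcd.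
split; first by exists a, b, c, d.
have [ep eq er es et] := coefs_of_perm hroots hperm.
pose P := fun z : C => z^+5 + p*z^+4 + q*z^+3 + r*z^+2 + s*z + t.
have hPf : forall z, P z = (z-a)^+2*(z-b)*(z-c)*(z-d).
  by move=> z; rewrite /P ep eq er es et; ring.
have hPc : forall z, P z^* = (P z)^*.
  move=> z; rewrite /P !(rmorphD, rmorphM, rmorphXn) /=.
  by rewrite (conj_Creal hp) (conj_Creal hq) (conj_Creal hr) (conj_Creal hs) (conj_Creal ht).
have hroot : forall z, (z-a)^+2*(z-b)*(z-c)*(z-d) = 0 -> z^* \in [:: a; b; c; d].
  move=> z hz; have : P z^* = 0 by rewrite hPc hPf hz rmorph0.
  rewrite hPf => /eqP; rewrite !mulf_eq0 /= !subr_eq0 !inE => H.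
  by rewrite -!orbA orbA orbb in H.
pose G := fun z : C => 5 * z^+4 + 4 * p * z^+3 + 3 * q * z^+2 + 2 * r * z + s.
have hGf : forall z, G z = 2*(z-a)*(z-b)*(z-c)*(z-d)
    + (z-a)^+2*((z-c)*(z-d)+(z-b)*(z-d)+(z-b)*(z-c)).
  by move=> z; rewrite /G ep eq er es; ring.
have hGc : forall z, G z^* = (G z)^*.
  move=> z; rewrite /G !(rmorphD, rmorphM, rmorphXn, rmorph_nat) /=.
  by rewrite (conj_Creal hp) (conj_Creal hq) (conj_Creal hr) (conj_Creal hs).
have Ga : G a = 0 by rewrite hGf; ring.
have ha : a \is Num.real.
  apply/CrealP; have : a^* \in [:: a; b; c; d] by apply: hroot; ring.
  rewrite !inE => /or4P [/eqP // | /eqP E | /eqP E | /eqP E].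
  - have Gb : G b = 0 by rewrite -E hGc Ga rmorph0.
    have : (b-a)^+2*(b-c)*(b-d) = 0 by rewrite -Gb hGf; ring.
    move/eqP; rewrite !mulf_eq0 /= !subr_eq0 ?orbb eq_sym.
    by rewrite (negbTE hab) (negbTE hbc) (negbTE hbd).
  - have Gc : G c = 0 by rewrite -E hGc Ga rmorph0.
    have : (c-a)^+2*(c-b)*(c-d) = 0 by rewrite -Gc hGf; ring.
    move/eqP; rewrite !mulf_eq0 /= !subr_eq0 ?orbb eq_sym [c == b]eq_sym.
    by rewrite (negbTE hac) (negbTE hbc) (negbTE hcd).
  - have Gd : G d = 0 by rewrite -E hGc Ga rmorph0.
    have : (d-a)^+2*(d-b)*(d-c) = 0 by rewrite -Gd hGf; ring.
    move/eqP; rewrite !mulf_eq0 /= !subr_eq0 ?orbb eq_sym [d == b]eq_sym [d == c]eq_sym.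
    by rewrite (negbTE had) (negbTE hbd) (negbTE hcd).
have hcl : forall z, z \in [:: b; c; d] -> z^* \in [:: b; c; d].
  move=> z hz; have : z^* \in [:: a; b; c; d].
    apply: hroot; move: hz; rewrite !inE => /or3P [/eqP -> | /eqP -> | /eqP ->]; ring.
  rewrite inE => /orP [/eqP E | //].
  have za : z = a by rewrite (conj_eq E) (conj_Creal ha).
  by move: huniq; rewrite /= -za hz.
have hcase : all (fun z => z \is Num.real) [:: b; c; d] \/
  exists w u v, [/\ perm_eq al [:: a; a; w; u; v], uniq [:: a; w; u; v],
                   w \is Num.real, u \isn't Num.real & v = u^*].
  have cb : b^* \in [:: b; c; d] by apply: hcl; rewrite !inE eqxx.
  have cc : c^* \in [:: b; c; d] by apply: hcl; rewrite !inE eqxx ?orbT.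
  have cd : d^* \in [:: b; c; d] by apply: hcl; rewrite !inE eqxx ?orbT.
  rewrite !inE in cb cc cd.
  case hb: (b \is Num.real); case hc: (c \is Num.real); case hd: (d \is Num.real);
    move: (hb) (hc) (hd); rewrite !CrealE => hb' hc' hd'.
  - by left; rewrite /= hb hc hd.
  -
    exfalso; move/eqP: hb' => hb'; move/eqP: hc' => hc'.
    case/or3P: cd => /eqP E.
    + by move: hbd; rewrite (conj_eq E) hb' eqxx.
    + by move: hcd; rewrite (conj_eq E) hc' eqxx.
    + by rewrite E eqxx in hd'.
  -
    exfalso; move/eqP: hb' => hb'; move/eqP: hd' => hd'.
    case/or3P: cc => /eqP E.
    + by move: hbc; rewrite (conj_eq E) hb' eqxx.
    + by rewrite E eqxx in hc'.
    + by move: hcd; rewrite (conj_eq E) hd' eqxx.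
  -
    right; move/eqP: hb' => hb'.
    case/or3P: cc => /eqP E.
    + by move: hbc; rewrite (conj_eq E) hb' eqxx.
    + by rewrite E eqxx in hc'.
    + by exists b, c, d; split => //; rewrite hc.
  -
    exfalso; move/eqP: hc' => hc'; move/eqP: hd' => hd'.
    case/or3P: cb => /eqP E.
    + by rewrite E eqxx in hb'.
    + by move: hbc; rewrite (conj_eq E) hc' eqxx.
    + by move: hbd; rewrite (conj_eq E) hd' eqxx.
  -
    right; move/eqP: hc' => hc'.
    case/or3P: cb => /eqP E.
    + by rewrite E eqxx in hb'.
    + by move: hbc; rewrite (conj_eq E) hc' eqxx.
    + exists c, b, d; split => //; last by rewrite hb.
      * exact: perm_trans hperm (perm1 _ _ _ _ _).
      * by rewrite /= !inE !negb_or hab hac had (eq_sym c b) hbc hbd hcd.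
  -
    right; move/eqP: hd' => hd'.
    case/or3P: cb => /eqP E.
    + by rewrite E eqxx in hb'.
    + exists d, b, c; split => //; last by rewrite hb.
      * exact: perm_trans hperm (perm2 _ _ _ _ _).
      * by rewrite /= !inE !negb_or hab hac had (eq_sym d b) (eq_sym d c) hbc hbd hcd.
    + by move: hbd; rewrite (conj_eq E) hd' eqxx.
  -
    exfalso.
    case/or3P: cb => /eqP E.
    + by rewrite E eqxx in hb'.
    + case/or3P: cd => /eqP E'.
      * by move: hcd; rewrite -E (conj_eq E') eqxx.
      * by move: hbd; rewrite (conj_eq E') -E conjCK eqxx.
      * by rewrite E' eqxx in hd'.
    + case/or3P: cc => /eqP E'.
      * by move: hcd; rewrite -E (conj_eq E') eqxx.
      * by rewrite E' eqxx in hc'.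
      * by move: hbc; rewrite (conj_eq E') -E conjCK eqxx.
split.
- move=> Lpos; case: hcase => [hall | [w [u [v [hp' hu' hw hu hv]]]]].
  + by exists a, b, c, d; split => //; move: hall; rewrite /= ha.
  + exfalso; move: Lpos; rewrite (L1_perm hroots hp') => Lp.
    have := lt_trans Lp (sign_neg _ _ _ _ _ ha hw hv (uniq_prod _ _ _ _ _ hu')).
    by rewrite ltxx.
- move=> Lneg; case: hcase => [hall | [w [u [v [hp' hu' hw hu hv]]]]].
  + exfalso; move: hall => /andP [hb /andP [hc /andP [hd _]]].
    move: Lneg; rewrite hL1 => Ln; have := lt_trans (sign_pos _ _ _ _ _ ha hb hc hd hX) Ln.
    by rewrite ltxx.
  + by exists a, w, u, v; split.
Qed.
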